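(* Let $k\ge 1$, $0\le r<k$ and $n\ge1$ be integers, and let $$A_n(k,r,x;q)=\left(q^{(k-r-1)j}\begin{bmatrix} i-k+r+1\\ j\end{bmatrix}_q x^k+q^{(k-r)j}\begin{bmatrix} i+r+1\\ j+1\end{bmatrix}_q\right)_{i,j=0}^{n-1}.$$ Then $x^r\det A_n(k,r,x;q)=F^{(k)}_{kn+r}(x;q)$.
   Context: Here $q$ is an indeterminate and all quantities lie in $\mathbb{Q}(q)[x]$. The $q$-binomial coefficient is defined for integers $m$ (possibly negative) and $j$ by $\begin{bmatrix} m\\ j\end{bmatrix}_q=\prod_{t=0}^{j-1}\frac{1-q^{m-t}}{1-q^{t+1}}$ if $j\ge0$ and $0$ if $j<0$. For an integer $k\ge1$, the $q$-Fibonacci polynomials $F^{(k)}_n(x;q)$ ($n\ge0$) are defined by $F^{(k)}_n(x;q)=x^n$ for $0\le n<k$ and $F^{(k)}_{n+k}(x;q)=xF^{(k)}_{n+k-1}(x;q)+q^nF^{(k)}_n(x;q)$ for $n\ge0$. *)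

(* Defs.v *)
From HB Require Import structures.
From mathcomp Require Import all_boot all_order all_algebra.
Set Implicit Arguments. Unset Strict Implicit. Unset Printing Implicit Defensive.
Import Order.TTheory GRing.Theory Num.Theory.
Local Open Scope ring_scope.

Definition Kq : fieldType := {fraction {poly rat}}.

Definition qq : Kq := tofrac ('X : {poly rat}).

Definition qbinom (m : int) (j : nat) : Kq :=
  \prod_(t < j) ((1 - qq ^ (m - (t : nat)%:Z)) / (1 - qq ^+ t.+1)).

Definition Amat (k r n : nat) : 'M[{poly Kq}]_n :=
  \matrix_(i < n, j < n)
    ((qq ^+ ((k - r - 1) * j) * qbinom ((i : nat)%:Z - k%:Z + r%:Z + 1) j)%:P
       * 'X ^+ k
     + (qq ^+ ((k - r) * j) * qbinom ((i : nat)%:Z + r%:Z + 1) j.+1)%:P).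

(* Main.v *)
Require Import Defs.
From HB Require Import structures.
From mathcomp Require Import all_boot all_order all_algebra.
From mathcomp Require Import ring lra zify.
Import Order.TTheory GRing.Theory Num.Theory.
Local Open Scope ring_scope.
Section DetLemmas.
Variable R : comNzRingType.

Lemma det_lastcol n (A : 'M[R]_n.+1) :
  (forall i, A i ord_max = (i == ord_max)%:R) ->
  \det A = \det (row' ord_max (col' ord_max A)).
Proof.
move=> hA; rewrite (expand_det_col _ ord_max) (bigD1 ord_max) //= big1.
  by rewrite hA eqxx mul1r addr0 /cofactor /= addnn -signr_odd odd_double expr0 mul1r.
by move=> i /negPf hi; rewrite hA hi mul0r.
Qed.

Lemma det_lastrow n (A : 'M[R]_n.+1) :
  (forall j, A ord_max j = (j == ord_max)%:R) ->
  \det A = \det (row' ord_max (col' ord_max A)).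
Proof.
move=> hA; rewrite -det_tr det_lastcol; last by move=> i; rewrite mxE hA.
by rewrite -det_tr; congr (\det _); apply/matrixP => i j; rewrite !mxE.
Qed.

Lemma lift_neq m (i : 'I_m.+1) j : (lift i j == i) = false.
Proof. by apply/negP => /eqP h; have := neq_lift i j; rewrite h eqxx. Qed.

Definition Mxg (f : nat -> {poly R}) n (p : {poly R}) : 'M[R]_n.+1 :=
  \matrix_(s, j) (if j == ord_max then p`_s else (f j)`_s).

Lemma det_eval n (f : nat -> {poly R}) (z : nat -> R) :
  (forall j, (j < n)%N -> (size (f j) <= n.+1)%N) ->
  \det (\matrix_(i < n, j < n) (f j).[z i]) =
  \det (\matrix_(i < n, s < n) z i ^+ s) *
  \det (Mxg f n (\prod_(i < n) ('X - (z i)%:P))).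
Proof.
move=> hf; set p := \prod_(i < n) _.
have sp : size p = n.+1 by rewrite size_prod_XsubC /index_enum; unlock; rewrite -enumT size_enum_ord.
have p1 : p`_n = 1.
  by have := lead_coef_prod_XsubC (index_enum 'I_n) predT (fun i => z i); rewrite /lead_coef sp.
have pz : forall i, (i < n)%N -> p.[z i] = 0.
  move=> i hi; rewrite /p horner_prod (bigD1 (Ordinal hi)) //=.
  by rewrite hornerXsubC subrr mul0r.
pose E : 'M[R]_n.+1 := \matrix_(i, s) (if i == ord_max then (s == ord_max)%:R else z i ^+ s).
have dE : \det E = \det (\matrix_(i < n, s < n) z i ^+ s).
  rewrite det_lastrow; last by move=> j; rewrite mxE eqxx.
  congr (\det _); apply/matrixP => i j; rewrite !mxE.
  by rewrite lift_neq !lift_max.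
rewrite -dE -det_mulmx det_lastcol; last first.
  move=> i; rewrite !mxE.
  have [->|hi] := eqVneq i ord_max.
    rewrite (bigD1 ord_max) //= big1 ?mxE ?eqxx ?mul1r ?addr0 //.
    by move=> s /negPf hs; rewrite !mxE eqxx hs mul0r.
  under eq_bigr do rewrite !mxE (negPf hi).
  have hi' : (i < n)%N by rewrite ltn_neqAle -ltnS ltn_ord andbT; apply: contra hi => /eqP h; apply/eqP/val_inj.
  transitivity p.[z i]; last by rewrite pz.
  rewrite (@horner_coef_wide _ n.+1); last by rewrite sp.
  by apply: eq_bigr => s _; rewrite eqxx mulrC.
congr (\det _); apply/matrixP => i j; rewrite !mxE.
rewrite (@horner_coef_wide _ n.+1); last by rewrite hf.
by apply: eq_bigr => s _; rewrite !mxE !lift_neq !lift_max mulrC.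
Qed.

End DetLemmas.
Arguments Mxg {R}.

Section Main.
Variable F : fieldType.
Variable q : F.
Hypothesis q0 : q != 0.
Hypothesis qn : forall n, 1 - q ^+ n.+1 != 0.
Variable k : nat.
Hypothesis k1 : (0 < k)%N.

Local Notation R := {poly F}.
Definition pi (c : F) n : {poly R} := \prod_(t < n) ('X - (c * q ^+ t)%:P%:P).
Definition al1 t := - (q ^+ (k-1) * q ^+ t)^-1 / (1 - q ^+ t.+1).
Definition al2 t := - (q^-1 * q ^+ t)^-1 / (1 - q ^+ t.+1).
Definition lam n := q ^+ ((k-1)*n) * \prod_(t < n) al1 t.
Definition kap n := q ^+ (k*n) * \prod_(t < n.+1) al2 t.
Definition P j : {poly R} :=
  (('X : R) ^+ k * (lam j)%:P)%:P * pi (q ^+ (k-1)) j + (kap j)%:P%:P * pi q^-1 j.+1.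
Definition Psi n p := \det (Mxg P n p).

Lemma size_pi c n : size (pi c n) = n.+1.
Proof. by rewrite size_prod_XsubC /index_enum; unlock; rewrite -enumT size_enum_ord. Qed.

Lemma pi_top c n : (pi c n)`_n = 1.
Proof.
by have := lead_coef_prod_XsubC (index_enum 'I_n) predT (fun t => (c * q ^+ t)%:P);
  rewrite /lead_coef -/(pi c n) size_pi.
Qed.

Lemma pi_hi c n s : (n < s)%N -> (pi c n)`_s = 0.
Proof. by move=> h; rewrite nth_default // size_pi. Qed.

Lemma coefP_hi j s : (j.+1 < s)%N -> (P j)`_s = 0.
Proof.
move=> h; rewrite /P coefD !coefCM !pi_hi ?mulr0 ?addr0 //.
exact: ltn_trans h.
Qed.

Lemma coefP_top n : (P n)`_n.+1 = (kap n)%:P.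
Proof. by rewrite /P coefD !coefCM pi_hi // pi_top mulr0 mulr1 add0r. Qed.

Lemma Psi_sum n p :
  Psi n p = \sum_(s < n.+1) p`_s * cofactor (Mxg P n 0) s ord_max.
Proof.
rewrite /Psi (expand_det_col _ ord_max); apply: eq_bigr => s _.
rewrite mxE eqxx; congr (_ * _); rewrite /cofactor; congr (_ * \det _).
by apply/matrixP => i j; rewrite !mxE lift_neq.
Qed.

Lemma Psi_add n p p' : Psi n (p + p') = Psi n p + Psi n p'.
Proof. by rewrite !Psi_sum -big_split; apply: eq_bigr => s _; rewrite coefD mulrDl. Qed.

Lemma Psi_opp n p : Psi n (- p) = - Psi n p.
Proof. by rewrite !Psi_sum -sumrN; apply: eq_bigr => s _; rewrite coefN mulNr. Qed.

Lemma Psi_sub n p p' : Psi n (p - p') = Psi n p - Psi n p'.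
Proof. by rewrite Psi_add Psi_opp. Qed.

Lemma Psi_scale n a p : Psi n (a%:P * p) = a * Psi n p.
Proof. rewrite !Psi_sum big_distrr /=; apply: eq_bigr => s _. rewrite coefCM mulrA. done. Qed.

Lemma Psi_L n p :
  Psi n.+1 p = - (kap n)%:P * Psi n p + p`_n.+1 * Psi n (P n).
Proof.
rewrite /Psi (expand_det_row _ ord_max) big_ord_recr /= big_ord_recr /=.
rewrite big1 ?add0r; last first.
  move=> i _; rewrite mxE /=.
  have -> : (widen_ord (leqnSn n.+1) (widen_ord (leqnSn n) i) == ord_max) = false.
    by apply/negP => /eqP/(congr1 val) /= h; have := ltn_ord i; lia.
  by rewrite coefP_hi ?mul0r // ltnS ltn_ord.
have hw : (widen_ord (leqnSn n.+1) (@ord_max n) == ord_max) = false.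
  by apply/negP => /eqP/(congr1 val) /=; lia.
rewrite !mxE hw eqxx /= coefP_top /cofactor /=.
have -> : row' ord_max (col' (widen_ord (leqnSn n.+1) ord_max) (Mxg P n.+1 p)) = Mxg P n p.
  apply/matrixP => i j; rewrite !mxE.
  have [->|hj] := eqVneq j ord_max.
    have -> : lift (widen_ord (leqnSn n.+1) ord_max) (@ord_max n) = ord_max.
      by apply/val_inj; rewrite /= /bump leqnn.
    by rewrite !eqxx lift_max.
  have hjn : (j < n)%N.
    by have := ltn_ord j; move: hj; rewrite -val_eqE /=; lia.
  have hv : nat_of_ord (lift (widen_ord (leqnSn n.+1) (@ord_max n)) j) = j.
    by rewrite /= /bump leqNgt hjn.
  have -> : (lift (widen_ord (leqnSn n.+1) ord_max) j == ord_max) = false.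
    by apply/negP => /eqP/(congr1 (@nat_of_ord _)); rewrite hv /= => h; move: hjn; rewrite h ltnNge leqnSn.
  by rewrite hv lift_max.
have -> : row' ord_max (col' ord_max (Mxg P n.+1 p)) = Mxg P n (P n).
  apply/matrixP => i j; rewrite !mxE lift_neq !lift_max.
  by case: (eqVneq j ord_max) => [->|_] //=.
rewrite addSn addnn exprS -signr_odd odd_double expr0 mulr1 addnn -signr_odd odd_double.
by rewrite expr0 mul1r mulN1r mulrN mulNr.
Qed.

Lemma Psi_rec n c :
  Psi n.+1 (pi c n.+1) - Psi n.+1 (pi (c / q) n.+1) =
  - ((c / q - c * q ^+ n) * kap n)%:P * Psi n (pi c n).
Proof.
have e1 : pi c n.+1 = pi c n * ('X - (c * q ^+ n)%:P%:P) by rewrite /pi big_ord_recr.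
have e2 : pi (c / q) n.+1 = ('X - (c / q)%:P%:P) * pi c n.
  rewrite /pi big_ord_recl expr0 mulr1; congr (_ * _); apply: eq_bigr => t _.
  by rewrite exprS mulrA divfK.
have e3 : pi c n.+1 - pi (c / q) n.+1 = ((c / q - c * q ^+ n)%:P)%:P * pi c n.
  rewrite e1 e2 !rmorphB /=; ring.
rewrite -Psi_sub e3 Psi_scale Psi_L pi_hi // mul0r addr0.
by rewrite (polyCM (c / q - c * q ^+ n) (kap n)) !mulNr mulrN mulrA.
Qed.

Lemma Psi_wrap n :
  Psi n.+1 (pi q^-1 n.+1) = ('X ^+ k * (lam n)%:P) * Psi n (pi (q ^+ (k-1)) n).
Proof.
rewrite Psi_L pi_top mul1r /P Psi_add !Psi_scale.
by rewrite mulNr addrC -addrA subrr addr0.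
Qed.

Definition rho n := \prod_(i < n) (q ^+ n - q ^+ i).

Lemma rhoS n : rho n.+1 = (q ^+ n.+1 - 1) * (q ^+ n * rho n).
Proof.
rewrite /rho big_ord_recl expr0; congr (_ * _).
rewrite (eq_bigr (fun i : 'I_n => q * (q ^+ n - q ^+ i))); last first.
  by move=> i _; rewrite lift0 !exprS mulrBr.
by rewrite big_split /= prodr_const card_ord.
Qed.

Lemma I1 n : rho n * lam n = 1.
Proof.
elim: n => [|n IH]; first by rewrite /rho /lam !big_ord0 muln0 expr0 !mul1r.
have -> : rho n.+1 * lam n.+1 =
   (rho n * lam n) * ((q ^+ n.+1 - 1) * q ^+ n * q ^+ (k-1) * al1 n).
  rewrite rhoS /lam big_ord_recr /= mulnS exprD; ring.
rewrite IH mul1r /al1.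
have h1 := qn n; have h2 : q ^+ (k-1) * q ^+ n != 0 by rewrite mulf_neq0 // expf_neq0.
field.
by rewrite ?qn ?expf_neq0 ?invr_eq0 ?q0.
Qed.

Lemma I2 n : rho n * (q ^+ n.+1 - 1) * kap n = q ^+ (k * n).+1.
Proof.
elim: n => [|n IH].
  rewrite /rho /kap big_ord1 big_ord0 muln0 !expr0 /al2 mul1r expr1 mulr1 mul1r.
  have h := qn 0; rewrite expr1 in h.
  field; by rewrite h q0 oner_neq0.
have -> : rho n.+1 * (q ^+ n.+2 - 1) * kap n.+1 =
   (rho n * (q ^+ n.+1 - 1) * kap n) * q ^+ k * (q ^+ n * (q ^+ n.+2 - 1) * al2 n.+1).
  rewrite rhoS /kap big_ord_recr /= mulnS exprD; ring.
rewrite IH /al2 [q ^+ n.+1]exprS.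
have -> : (k * n.+1).+1 = ((k * n).+1 + k)%N by rewrite mulnS; lia.
rewrite exprD.
have h1 := qn n.+1; have h2 : q^-1 * q ^+ n.+1 != 0 by rewrite mulf_neq0 ?invr_eq0 // expf_neq0.
field.
by rewrite ?qn ?expf_neq0 ?invr_eq0 ?q0.
Qed.

Definition V n : R := \det (\matrix_(i < n, s < n) (q ^+ (i * s))%:P).

Lemma V_S n : V n.+1 = V n * (rho n)%:P.
Proof.
have eV m : V m = \prod_(i < m) \prod_(j < m | (i < j)%N) ((q ^+ j)%:P - (q ^+ i)%:P).
  have := det_Vandermonde (\row_(s < m) (q ^+ s)%:P : 'rV[R]_m).
  under eq_bigr do under eq_bigr do rewrite !mxE.
  move=> <-; rewrite /V; congr (\det _).
  by apply/matrixP => i j; rewrite !mxE -rmorphXn /= -exprM mulnC.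
rewrite !eV big_ord_recr /= [X in _ * X]big1 ?mulr1; last first.
  by move=> j; rewrite ltnNge -ltnS ltn_ord.
rewrite /rho rmorph_prod -big_split /=; apply: eq_bigr => i _.
rewrite big_mkcond big_ord_recr /= -big_mkcond /= ltn_ord rmorphB /=; congr (_ * _).
Qed.

Definition g r n := ('X : R) ^+ r * V n * Psi n (pi (q ^+ r) n).

Lemma g0 r : g r 0 = 'X ^+ r.
Proof.
rewrite /g /V det_mx00 mulr1 /Psi det_mx11 mxE /=.
by rewrite /pi big_ord0 coefC /= mulr1.
Qed.

Lemma g_rec r n : (0 < r)%N ->
  g r n.+1 = 'X * g r.-1 n.+1 + (q ^+ (k * n + r))%:P * g r n.
Proof.
case: r => // r _ /=.
have h := Psi_rec n (q ^+ r.+1).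
have e : q ^+ r.+1 / q = q ^+ r by rewrite exprSr mulfK.
rewrite e in h.
have hF : - (rho n * ((q ^+ r - q ^+ r.+1 * q ^+ n) * kap n)) = q ^+ (k * n + r.+1).
  have -> : - (rho n * ((q ^+ r - q ^+ r.+1 * q ^+ n) * kap n)) =
    q ^+ r * (rho n * (q ^+ n.+1 - 1) * kap n) by rewrite !exprS; ring.
  by rewrite I2 -exprD; congr (_ ^+ _); lia.
rewrite /g -(subrK (Psi n.+1 (pi (q ^+ r) n.+1)) (Psi n.+1 (pi (q ^+ r.+1) n.+1))) h.
rewrite V_S -hF !rmorphN !rmorphM /=.
rewrite exprS; ring.
Qed.

Lemma g_wrap n : g 0 n.+1 = 'X * g (k - 1) n + (q ^+ (k * n))%:P * g 0 n.
Proof.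
have h := Psi_rec n 1.
rewrite div1r in h.
have hF : - (rho n * ((q^-1 - 1 * q ^+ n) * kap n)) = q ^+ (k * n).
  have -> : - (rho n * ((q^-1 - 1 * q ^+ n) * kap n)) =
    q^-1 * (rho n * (q ^+ n.+1 - 1) * kap n).
    rewrite exprS; field; exact: q0.
  by rewrite I2 exprS mulKf.
rewrite /g !expr0 !mul1r -(subrK (Psi n.+1 (pi q^-1 n.+1)) (Psi n.+1 (pi 1 n.+1))) h.
rewrite Psi_wrap V_S -hF.
have hl := I1 n.
have hk : ('X : R) ^+ k = 'X * 'X ^+ (k - 1) by rewrite -exprS subn1 prednK.
rewrite hk.
move: (rho n) (lam n) (kap n) (q^-1 - 1 * q ^+ n) hl => r0 L K a hl.
have -> : 'X * ('X ^+ (k - 1) * V n * Psi n (pi (q ^+ (k - 1)) n)) =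
  'X * 'X ^+ (k - 1) * V n * Psi n (pi (q ^+ (k - 1)) n) * (r0%:P * L%:P).
  by rewrite -rmorphM hl rmorph1 mulr1 !mulrA.
rewrite !rmorphN !rmorphM /=; ring.
Qed.

Lemma g_F (Fs : nat -> R) :
  (forall m, (m < k)%N -> Fs m = 'X ^+ m) ->
  (forall m, Fs (m + k)%N = 'X * Fs (m + k - 1)%N + (q ^+ m)%:P * Fs m) ->
  forall n r, (r < k)%N -> g r n = Fs (k * n + r)%N.
Proof.
move=> hF0 hFr; elim=> [|n IH] r.
  by move=> hr; rewrite g0 muln0 add0n hF0.
elim: r => [|r IHr] hr.
  have hk : (k - 1 < k)%N by rewrite subn1 prednK // ltnSn.
  rewrite g_wrap (IH _ hk) (IH _ k1).
  have -> : (k * n.+1 + 0 = k * n + k)%N by rewrite mulnS; lia.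
  rewrite hFr addn0; congr (_ * Fs _ + _); lia.
rewrite g_rec //= (IHr (ltnW hr)) (IH _ hr).
have -> : (k * n.+1 + r.+1 = (k * n + r.+1) + k)%N by rewrite mulnS; lia.
by rewrite hFr; congr (_ * Fs _ + _); rewrite mulnS; lia.
Qed.

Lemma pi_eval c n z : (pi c n).[z%:P] = (\prod_(t < n) (z - c * q ^+ t))%:P.
Proof.
rewrite /pi horner_prod rmorph_prod; apply: eq_bigr => t _.
by rewrite hornerXsubC rmorphB.
Qed.

Lemma factorA (i t r : nat) : (r < k)%N ->
  al1 t * (q ^+ (r + i) - q ^+ (k - 1) * q ^+ t) =
  (1 - q ^ ((i%:Z - k%:Z + r%:Z + 1) - t%:Z)) / (1 - q ^+ t.+1).
Proof.
move=> hr.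
have e : q ^ ((i%:Z - k%:Z + r%:Z + 1) - t%:Z) = q ^+ (r + i) * (q ^+ (k - 1) * q ^+ t)^-1.
  have -> : (i%:Z - k%:Z + r%:Z + 1 - t%:Z) = (r + i)%N%:Z + (- ((k - 1 + t)%N%:Z)) by lia.
  by rewrite expfzDr // -exprnP -exprnN [q ^+ (k - 1 + t)]exprD.
rewrite e /al1.
have h1 := qn t; have h2 : q ^+ (k - 1) * q ^+ t != 0 by rewrite mulf_neq0 // expf_neq0.
field.
by rewrite ?qn ?expf_neq0 ?invr_eq0 ?q0.
Qed.

Lemma factorB (i t r : nat) :
  al2 t * (q ^+ (r + i) - q^-1 * q ^+ t) =
  (1 - q ^ ((i%:Z + r%:Z + 1) - t%:Z)) / (1 - q ^+ t.+1).
Proof.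
have e : q ^ ((i%:Z + r%:Z + 1) - t%:Z) = q ^+ (r + i) * q * (q ^+ t)^-1.
  have -> : (i%:Z + r%:Z + 1 - t%:Z) = (r + i).+1%N%:Z + (- (t%:Z)) by lia.
  by rewrite expfzDr // -exprnP -exprnN [q ^+ (r + i).+1]exprSr.
rewrite e /al2.
have h1 := qn t.
field.
by rewrite ?qn ?expf_neq0 ?invr_eq0 ?q0.
Qed.

Definition qbg (m : int) (j : nat) : F :=
  \prod_(t < j) ((1 - q ^ (m - (t : nat)%:Z)) / (1 - q ^+ t.+1)).

Definition Amatg r n : 'M[R]_n :=
  \matrix_(i < n, j < n)
    ((q ^+ ((k - r - 1) * j) * qbg ((i : nat)%:Z - k%:Z + r%:Z + 1) j)%:P
       * 'X ^+ k
     + (q ^+ ((k - r) * j) * qbg ((i : nat)%:Z + r%:Z + 1) j.+1)%:P).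

Lemma eval_entry r n (i j : 'I_n) : (r < k)%N ->
  (P j).[(q ^+ (r + i))%:P] = Amatg r n i j * (q ^+ (r * j))%:P.
Proof.
move=> hr.
have hA : lam j * \prod_(t < j) (q ^+ (r + i) - q ^+ (k - 1) * q ^+ t) =
    q ^+ ((k - r - 1) * j) * qbg ((i : nat)%:Z - k%:Z + r%:Z + 1) j * q ^+ (r * j).
  rewrite /lam /qbg -mulrA -big_split /=.
  under eq_bigr => t _ do rewrite factorA //.
  rewrite mulrAC -exprD.
  by congr (_ ^+ _ * _); rewrite -mulnDl; congr (_ * _)%N; lia.
have hB : kap j * \prod_(t < j.+1) (q ^+ (r + i) - q^-1 * q ^+ t) =
    q ^+ ((k - r) * j) * qbg ((i : nat)%:Z + r%:Z + 1) j.+1 * q ^+ (r * j).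
  rewrite /kap /qbg -mulrA -big_split /=.
  under eq_bigr => t _ do rewrite factorB.
  rewrite mulrAC -exprD.
  by congr (_ ^+ _ * _); rewrite -mulnDl; congr (_ * _)%N; lia.
rewrite /P hornerD !hornerCM !pi_eval mxE.
move: hA hB; set A1 := \prod_(t < j) _; set B1 := \prod_(t < j.+1) _.
move=> hA hB.
rewrite -mulrA -rmorphM hA -rmorphM hB.
move: (qbg _ j) (qbg _ j.+1) => Q1 Q2.
rewrite !rmorphM /=; ring.
Qed.

Lemma size_P j : (size (P j) <= j.+2)%N.
Proof.
rewrite /P !mul_polyC (leq_trans (size_add _ _)) // geq_max.
rewrite (leq_trans (size_scale_leq _ _)) ?size_pi //=.
by rewrite (leq_trans (size_scale_leq _ _)) ?size_pi.
Qed.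

Lemma detA r n : (r < k)%N -> \det (Amatg r n) = V n * Psi n (pi (q ^+ r) n).
Proof.
move=> hr.
set D := \prod_(j < n) ((q ^+ (r * j))%:P : R).
have D0 : D != 0 by apply/prodf_neq0 => j _; rewrite polyC_eq0 expf_neq0.
apply: (mulIf D0).
have hd : \det (diag_mx (\row_(j < n) ((q ^+ (r * j))%:P : R))) = D.
  by rewrite det_diag; apply: eq_bigr => j _; rewrite mxE.
have h1 : \det (\matrix_(i < n, j < n) (P j).[(q ^+ (r + i))%:P]) = \det (Amatg r n) * D.
  rewrite -hd -det_mulmx mul_mx_diag; congr (\det _); apply/matrixP => i j.
  by rewrite [LHS]mxE eval_entry // [RHS]mxE; congr (_ * _); rewrite mxE.
have hs : forall j, (j < n)%N -> (size (P j) <= n.+1)%N.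
  by move=> m hm; apply: leq_trans (size_P m) _.
have h2 := @det_eval _ n P (fun i : nat => (q ^+ (r + i))%:P) hs.
rewrite -h1 h2.
have -> : \prod_(i < n) ('X - ((q ^+ (r + i))%:P)%:P) = pi (q ^+ r) n.
  by apply: eq_bigr => i _; rewrite exprD.
have -> : \det (\matrix_(i < n, s < n) ((q ^+ (r + i))%:P : R) ^+ s) = V n * D.
  rewrite -hd /V -det_mulmx mul_mx_diag; congr (\det _); apply/matrixP => i j.
  by rewrite !mxE -!rmorphXn -rmorphM /= -!exprM -exprD mulnDl addnC.
by rewrite /Psi -!mulrA [D * _]mulrC.
Qed.

Lemma main_gen (Fs : nat -> R) r n : (r < k)%N ->
  (forall m, (m < k)%N -> Fs m = 'X ^+ m) ->
  (forall m, Fs (m + k)%N = 'X * Fs (m + k - 1)%N + (q ^+ m)%:P * Fs m) ->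
  'X ^+ r * \det (Amatg r n) = Fs (k * n + r)%N.
Proof. by move=> hr h0 h1; rewrite detA // mulrA; exact: g_F. Qed.

End Main.
Lemma qq_neq0 : qq != 0.
Proof. by rewrite /qq tofrac_eq0 polyX_eq0. Qed.

Lemma qq_n n : 1 - qq ^+ n.+1 != 0.
Proof.
rewrite /qq -tofracXn -tofrac1 -tofracB tofrac_eq0 subr_eq0 eq_sym.
apply/negP => /eqP h; move: (@size_polyXn rat n.+1); rewrite h size_poly1.
by [].
Qed.

Theorem theorem5 (k r n : nat) (F : nat -> {poly Kq}) :
  (1 <= k)%N -> (r < k)%N -> (1 <= n)%N ->
  (forall m : nat, (m < k)%N -> F m = 'X ^+ m) ->
  (forall m : nat, F (m + k)%N = 'X * F (m + k - 1)%N + (qq ^+ m)%:P * F m) ->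
  'X ^+ r * \det (Amat k r n) = F (k * n + r)%N.
Proof.
move=> hk hr _ h0 h1.
exact: (@main_gen Kq qq qq_neq0 qq_n k hk F r n hr h0 h1).
Qed.
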